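(* Let $L$ be a compact convex subset of $\mathbb{R}^n$, and let $Q$ be a polytope in $\mathbb{R}^n$ having at most $n$ vertices. If for every unit vector $u$ the projection $L_u$ contains a translate of $Q_u$, then $L$ contains a translate of $Q$.
   Context: For a unit vector $u$ and a set $S\subseteq\mathbb{R}^n$, $S_u$ denotes the orthogonal projection of $S$ onto the hyperplane $u^\perp$. *)

(* Defs.v *)
From HB Require Import structures.
From mathcomp Require Import all_boot all_order all_algebra.
From mathcomp Require Import all_classical all_reals all_analysis.
Set Implicit Arguments. Unset Strict Implicit. Unset Printing Implicit Defensive.
Import Order.TTheory GRing.Theory Num.Theory.
Import numFieldNormedType.Exports.
Local Open Scope ring_scope.
Local Open Scope classical_set_scope.

Section Defs.
Variables (R : realType) (n : nat).

Definition dotv (x y : 'rV[R]_n) : R := \sum_(i < n) x 0 i * y 0 i.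

Definition unit_vec (u : 'rV[R]_n) : Prop := dotv u u = 1.

(* orthogonal projection onto the hyperplane u^perp (u a unit vector) *)
Definition proj_perp (u x : 'rV[R]_n) : 'rV[R]_n := x - dotv x u *: u.

Definition proj_set (u : 'rV[R]_n) (S : set 'rV[R]_n) : set 'rV[R]_n :=
  proj_perp u @` S.

Definition conv_hull (k : nat) (v : 'I_k -> 'rV[R]_n) : set 'rV[R]_n :=
  [set x | exists w : 'I_k -> R, (forall i, 0 <= w i) /\
        \sum_(i < k) w i = 1 /\ x = \sum_(i < k) w i *: v i].

Definition translate (S : set 'rV[R]_n) (t : 'rV[R]_n) : set 'rV[R]_n :=
  [set x + t | x in S].

Definition contains_translate (A B : set 'rV[R]_n) : Prop :=
  exists t, translate B t `<=` A.

End Defs.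

(* Main.v *)
Require Import Defs.
From HB Require Import structures.
From mathcomp Require Import all_boot all_order all_algebra.
From mathcomp Require Import all_classical all_reals all_analysis.
From mathcomp Require Import ring lra.
Import Order.TTheory GRing.Theory Num.Theory.
Import numFieldNormedType.Exports.
Local Open Scope ring_scope.
Local Open Scope classical_set_scope.

Section Aux.
Variables (R : realType) (n : nat).
Local Notation V := 'rV[R]_n.

Lemma dotvC (x y : V) : dotv x y = dotv y x.
Proof. by apply: eq_bigr => i _; rewrite mulrC. Qed.

Lemma dotvDl (x y z : V) : dotv (x + y) z = dotv x z + dotv y z.
Proof. by rewrite /dotv -big_split; apply: eq_bigr => i _; rewrite mxE mulrDl. Qed.

Lemma dotvZl a (x y : V) : dotv (a *: x) y = a * dotv x y.
Proof. by rewrite /dotv mulr_sumr; apply: eq_bigr => i _; rewrite mxE mulrA. Qed.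

Lemma dotvNl (x y : V) : dotv (- x) y = - dotv x y.
Proof. by rewrite -scaleN1r dotvZl mulN1r. Qed.

Lemma dotvBl (x y z : V) : dotv (x - y) z = dotv x z - dotv y z.
Proof. by rewrite dotvDl dotvNl. Qed.

Lemma dotvDr (x y z : V) : dotv z (x + y) = dotv z x + dotv z y.
Proof. by rewrite dotvC dotvDl !(dotvC z). Qed.
Lemma dotvZr a (x y : V) : dotv y (a *: x) = a * dotv y x.
Proof. by rewrite dotvC dotvZl dotvC. Qed.
Lemma dotvBr (x y z : V) : dotv z (x - y) = dotv z x - dotv z y.
Proof. by rewrite dotvC dotvBl !(dotvC z). Qed.

Lemma dotv_ge0 (x : V) : 0 <= dotv x x.
Proof. by apply: sumr_ge0 => i _; rewrite -expr2 sqr_ge0. Qed.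

Lemma dotv_eq0 (x : V) : dotv x x = 0 -> x = 0.
Proof.
move=> /eqP; rewrite psumr_eq0 => [/allP H|i _]; last by rewrite -expr2 sqr_ge0.
apply/rowP => j; rewrite mxE.
by have := H j (mem_index_enum _); rewrite /= mulf_eq0 orbb => /eqP.
Qed.


Lemma conv_step (L : set V) (x y : V) (b : R) : convex_set L ->
  0 <= b -> b <= 1 -> L x -> L y -> L (b *: x + (1 - b) *: y).
Proof.
move=> cL b0 b1 Lx Ly.
have := cL x y (Itv01 b0 b1); rewrite !inE => /(_ Lx Ly).
by [].
Qed.

Lemma convex_comb (L : set V) : convex_set L -> forall k (w : 'I_k -> R)
  (p : 'I_k -> V), (forall i, 0 <= w i) -> \sum_(i < k) w i = 1 ->
  (forall i, L (p i)) -> L (\sum_(i < k) w i *: p i).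
Proof.
move=> cL; elim=> [|k IH] w p w0 w1 Lp.
  by move: w1; rewrite big_ord0 => /eqP; rewrite eq_sym oner_eq0.
rewrite big_ord_recr /=; move: w1; rewrite big_ord_recr /= => w1.
set a := w ord_max in w1 *.
have s0 : 0 <= \sum_(i < k) w (widen_ord (leqnSn k) i).
  by apply: sumr_ge0 => i _; exact: w0.
have [a1|a1] := eqVneq a 1.
  have s00 : \sum_(i < k) w (widen_ord (leqnSn k) i) = 0 by lra.
  have z : forall i : 'I_k, w (widen_ord (leqnSn k) i) = 0.
    move=> i; move/eqP: s00; rewrite psumr_eq0 => [/allP H|j _]; last exact: w0.
    by apply/eqP; exact: (H i (mem_index_enum _)).
  rewrite big1 ?add0r ?a1 ?scale1r // => i _; by rewrite z scale0r.
set b := 1 - a.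
have bpos : 0 < b by rewrite /b; have := w0 ord_max; rewrite -/a => ha;
  rewrite lt_neqAle subr_ge0 eq_sym subr_eq0 eq_sym a1 /=; lra.
have := IH (fun i => w (widen_ord (leqnSn k) i) / b) (fun i => p (widen_ord (leqnSn k) i)).
move=> /(_ _ _ _) H.
have := @conv_step L (\sum_(i < k) (w (widen_ord (leqnSn k) i) / b) *: p (widen_ord (leqnSn k) i)) (p ord_max) b cL.
rewrite /b opprB addrCA subrr addr0 -/b.
have -> : b *: \sum_(i < k) (w (widen_ord (leqnSn k) i) / b) *: p (widen_ord (leqnSn k) i)
   = \sum_(i < k) w (widen_ord (leqnSn k) i) *: p (widen_ord (leqnSn k) i).
  rewrite scaler_sumr; apply: eq_bigr => i _; rewrite scalerA; congr (_ *: _).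
  by rewrite mulrCA divff ?mulr1 // gt_eqF.
apply.
- exact: ltW.
- rewrite /b; have := w0 ord_max; rewrite -/a; lra.
- apply: H.
  + by move=> i; apply: divr_ge0; [exact: w0 | exact: ltW].
  + rewrite -mulr_suml /b -[X in X / _](_ : 1 - a = _) ?divff ?gt_eqF //; lra.
  + by move=> i; exact: Lp.
  + exact: Lp.
Qed.


Lemma exists_orth (m : nat) (a : 'I_m -> V) : (m < n)%N ->
  exists u, unit_vec u /\ forall i, dotv (a i) u = 0.
Proof.
move=> mn.
pose A : 'M[R]_(m, n) := \matrix_(i, j) a i 0 j.
pose K := kermx A^T.
have rK : \rank K = (n - \rank A)%N by rewrite mxrank_ker mxrank_tr.
have rA : (\rank A <= m)%N by exact: rank_leq_row.
have [i Hi|H] := pickP (fun i => row i K != 0); last first.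
  have K0 : K = 0.
    apply/row_matrixP => i; rewrite row0; move: (H i) => /= /negbFE /eqP //.
  move: rK; rewrite K0 mxrank0 => /esym/eqP; rewrite subn_eq0 => h.
  have := leq_trans h rA; rewrite leqNgt mn //.
set r := row i K in Hi.
have rA0 : r *m A^T = 0 by rewrite /r -row_mul mulmx_ker row0.
have rr : 0 < dotv r r.
  rewrite lt_neqAle dotv_ge0 andbT eq_sym; apply/negP => /eqP /dotv_eq0 h.
  by rewrite h eqxx in Hi.
set s := Num.sqrt (dotv r r).
have s0 : 0 < s by rewrite sqrtr_gt0.
exists (s^-1 *: r); split.
  rewrite /unit_vec dotvZl dotvZr -(@sqr_sqrtr _ (dotv r r)) ?ltW // -/s.
  by field; rewrite gt_eqF.
move=> j; rewrite dotvZr; apply/eqP; rewrite mulf_eq0; apply/orP; right.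
have := congr1 (fun M : 'M[R]_(1, m) => M 0 j) rA0; rewrite !mxE => <-.
apply/eqP; apply: eq_bigr => l _; rewrite !mxE mulrC //.
Qed.


Lemma dotv_expand (a c : R) (d u : V) : dotv d u = 0 -> dotv u u = 1 ->
  dotv (a *: d + c *: u) (a *: d + c *: u) = a ^+ 2 * dotv d d + c ^+ 2.
Proof.
move=> du uu; rewrite !dotvDl !dotvDr !dotvZl !dotvZr du dotvC du uu.
rewrite !mulr0 addr0 add0r mulr1 !expr2 !mulrA; congr (_ + _); by rewrite -!mulrA.
Qed.

End Aux.
Section T.
Variables (R : realType) (n k : nat) (v : 'I_k.+1 -> 'rV[R]_n) (L : set 'rV[R]_n).
Hypothesis cpL : compact L.
Let T := prod_topology (fun _ : 'I_k.+1 => 'rV[R]_n).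
Let S : set T := [set X | forall i, L (X i)].
Let dd (X : T) i j := (X i - v i) - (X j - v j).
Let G (X : T) := \sum_(i < k.+1) \sum_(j < k.+1) dotv (dd X i j) (dd X i j).

Lemma cS : compact S.
Proof. exact: (@tychonoff _ (fun _ : 'I_k.+1 => 'rV[R]_n) (fun _ => L) (fun _ => cpL)). Qed.

Lemma cG : continuous G.
Proof.
apply: continuous_big; first exact: add_continuous.
move=> i _; apply: continuous_big; first exact: add_continuous.
move=> j _; apply: continuous_big; first exact: add_continuous.
move=> l _ X.
have h : {for X, continuous (fun Y : T => dd Y i j 0 l)}.
  rewrite /dd.
  apply: (@continuous_comp _ _ _ (fun Y : T => dd Y i j) (fun M : 'rV[R]_n => M 0 l)); last exact: coord_continuous.
  apply: continuousB; apply: continuousB; (try exact: proj_continuous); exact: cst_continuous.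
exact: continuousM.
Qed.

Lemma vert_in_hull i : conv_hull v (v i).
Proof.
exists (fun j => (j == i)%:R); split; first by move=> j; rewrite ler0n.
split.
  by rewrite (bigD1 i) //= eqxx big1 ?addr0 // => j /negbTE ->.
by rewrite (bigD1 i) //= eqxx scale1r big1 ?addr0 // => j /negbTE ->; rewrite scale0r.
Qed.

Lemma hyp_use u : contains_translate (proj_set u L) (proj_set u (conv_hull v)) ->
  exists t, forall i, exists l, L l /\ proj_perp u l = proj_perp u (v i) + t.
Proof.
move=> [t Ht]; exists t => i.
have : translate (proj_set u (conv_hull v)) t (proj_perp u (v i) + t).
  by exists (proj_perp u (v i)) => //; exists (v i) => //; exact: vert_in_hull.
by move/Ht => [l Ll e]; exists l.
Qed.

Lemma succ_case : convex_set L -> (k.+1 <= n)%N ->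
  (forall u : 'rV[R]_n, unit_vec u ->
     contains_translate (proj_set u L) (proj_set u (conv_hull v))) ->
  contains_translate L (conv_hull v).
Proof.
move=> cvL kn Hyp.
have S0 : S !=set0.
  have [u0 [u0u _]] := @exists_orth R n 0 (fun _ => 0) (leq_ltn_trans (leq0n k) kn).
  have [t Ht] := hyp_use u0 (Hyp u0 u0u).
  have [l [Ll _]] := Ht ord0.
  by exists (fun _ => l).
have [X XS Xmin] := compact_EVT_min S0 cS (continuous_subspaceT cG).
have LX : forall i, L (X i) by rewrite inE in XS.
pose z i := X i - v i.
have [u [uu uo]] := @exists_orth R n k (fun i => z (lift ord0 i) - z ord0) kn.
have uo' : forall i, dotv (z i - z ord0) u = 0.
  move=> i; case: (unliftP ord0 i) => [j ->|->]; first exact: uo.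
  by rewrite subrr /dotv big1 // => c _; rewrite mxE mul0r.
have ddo : forall i j, dotv (dd X i j) u = 0.
  move=> i j; rewrite /dd -/(z i) -/(z j).
  have -> : z i - z j = (z i - z ord0) - (z j - z ord0) by apply/rowP => c; rewrite /z !mxE; ring.
  by rewrite dotvBl !uo' subrr.
have [t Ht] := hyp_use u (Hyp u uu).
have [l Hl] := choice Ht.
pose s i := dotv (l i) u - dotv (v i) u.
have hc : forall i c, l i 0 c = v i 0 c + t 0 c + s i * u 0 c.
  move=> i c; have [_ e] := Hl i.
  have := congr1 (fun M : 'rV[R]_n => M 0 c) e; rewrite /proj_perp !mxE /s => h.
  rewrite mulrBl; lra.
pose D := G X.
pose E := \sum_(i < k.+1) \sum_(j < k.+1) (s i - s j) ^+ 2.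
have D0 : 0 <= D by apply: sumr_ge0 => i _; apply: sumr_ge0 => j _; exact: dotv_ge0.
have E0 : 0 <= E by apply: sumr_ge0 => i _; apply: sumr_ge0 => j _; exact: sqr_ge0.
have ineq : forall b, 0 <= b -> b <= 1 -> D <= b ^+ 2 * D + (1 - b) ^+ 2 * E.
  move=> b b0 b1.
  pose Y : T := fun i => b *: X i + (1 - b) *: l i.
  have YS : Y \in S by rewrite inE => i; apply: conv_step; [exact: cvL|exact: b0|exact: b1|exact: LX|exact: (Hl i).1].
  have := Xmin Y YS; rewrite -/D.
  suff -> : G Y = b ^+ 2 * D + (1 - b) ^+ 2 * E by [].
  have term : forall i j, dotv (dd Y i j) (dd Y i j) =
      b ^+ 2 * dotv (dd X i j) (dd X i j) + (1 - b) ^+ 2 * (s i - s j) ^+ 2.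
    move=> i j.
    have -> : dd Y i j = b *: dd X i j + ((1 - b) * (s i - s j)) *: u.
      apply/rowP => c; rewrite /dd /Y !mxE !hc; ring.
    by rewrite dotv_expand ?ddo ?(uu : dotv u u = 1) // exprMn.
  rewrite /G; under eq_bigr do under eq_bigr do rewrite term.
  rewrite /D /G /E mulr_sumr mulr_sumr -big_split; apply: eq_bigr => i _.
  by rewrite mulr_sumr mulr_sumr -big_split.
have DD : D = 0.
  apply/eqP; rewrite eq_le D0 andbT; rewrite leNgt; apply/negP => Dpos.
  pose e := D / (D + E).
  have DE : 0 < D + E by lra.
  have e0 : 0 <= e by apply: divr_ge0; lra.
  have e1 : e <= 1 by rewrite ler_pdivrMr //; lra.
  have := ineq (1 - e) ltac:(lra) ltac:(lra).
  have -> : (1 - (1 - e)) = e by ring.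
  have -> : (1 - e) ^+ 2 * D + e ^+ 2 * E = D * E / (D + E).
    rewrite /e; field; rewrite gt_eqF //.
  rewrite ler_pdivlMr // => h.
  have : D * D <= 0 by lra.
  rewrite leNgt => /negP; apply; exact: mulr_gt0.
have zi : forall i, z i = z ord0.
  move=> i; apply/eqP; rewrite -subr_eq0; apply/eqP; apply: dotv_eq0.
  move: DD => /eqP; rewrite /D /G psumr_eq0 => [/allP/(_ i (mem_index_enum _))|i' _].
    rewrite psumr_eq0 => [/allP/(_ ord0 (mem_index_enum _))/eqP //|j _].
    exact: dotv_ge0.
  by apply: sumr_ge0 => j _; exact: dotv_ge0.
exists (z ord0) => q [p [w [w0 [w1 ->]]] <-].
have -> : \sum_(i < k.+1) w i *: v i + z ord0 = \sum_(i < k.+1) w i *: X i.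
  have -> : \sum_(i < k.+1) w i *: X i = \sum_(i < k.+1) w i *: (v i + z ord0).
    by apply: eq_bigr => i _; rewrite -(zi i) /z addrC subrK.
  rewrite -[z ord0 in LHS]scale1r -w1 scaler_suml -big_split; apply: eq_bigr => i _.
  by rewrite [RHS]scalerDr.
exact: (@convex_comb R n L cvL k.+1 w X w0 w1 LX).
Qed.
End T.

Theorem lemma2p5 (R : realType) (n : nat) (L : set 'rV[R]_n)
  (k : nat) (v : 'I_k -> 'rV[R]_n) :
  compact L -> convex_set L -> (k <= n)%N ->
  (forall u : 'rV[R]_n, unit_vec u ->
     contains_translate (proj_set u L) (proj_set u (conv_hull v))) ->
  contains_translate L (conv_hull v).
Proof.
move=> cpL cvL kn Hyp.
case: k v kn Hyp => [|k] v kn Hyp.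
  exists 0 => x [y [w [_ [w1 _]]] _]; move: w1.
  by rewrite big_ord0 => /eqP; rewrite eq_sym oner_eq0.
exact: (@succ_case R n k v L cpL cvL kn Hyp).
Qed.
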